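(* Let $m,n$ be indeterminates and work in the ring of formal power series $\mathbb{Q}[m,n][[x]]$. Let $$f(x)=\sum_{k\ge 0}(-1)^k\, m(m+n)(m+2n)\cdots(m+(k-1)n)\,x^k = 1-mx+m(m+n)x^2-m(m+n)(m+2n)x^3+\cdots$$ (the empty product for $k=0$ being $1$). Define $c_{2j-1}=(m+(j-1)n)x$ and $c_{2j}=jn\,x$ for $j\ge 1$, so that $c_1=mx,\ c_2=nx,\ c_3=(m+n)x,\ c_4=2nx,\ c_5=(m+2n)x,\dots$, and for $N\ge 1$ let $$K_N=\cfrac{1}{1+\cfrac{c_1}{1+\cfrac{c_2}{1+\cdots+\cfrac{c_N}{1}}}}.$$ Then each $K_N$ is a rational function in $x$ whose expansion is a power series in $\mathbb{Q}[m,n][[x]]$, and $K_N\equiv f(x)\pmod{x^{N+1}}$. Consequently $K_N\to f$ in the $x$-adic topology, i.e. $f$ equals the infinite continued fraction $$f=\cfrac{1}{1+\cfrac{mx}{1+\cfrac{nx}{1+\cfrac{(m+n)x}{1+\cfrac{2nx}{1+\cfrac{(m+2n)x}{1+\cfrac{3nx}{1+\cdots}}}}}}}$$ in this formal sense.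
   Context: The series $f$ is divergent for every nonzero numerical $x$ (unless $m=0$), so the identity is understood as an identity of formal power series: the finite truncations $K_N$ of the continued fraction, expanded as power series in $x$, agree with $f$ up to and including the coefficient of $x^N$. *)

(* Defs.v *)
(* Formal power series in x are represented by their
   coefficient functions  nat -> R  (coefficient of x^k). *)
From HB Require Import structures.
From mathcomp Require Import all_boot all_order all_algebra.
Set Implicit Arguments. Unset Strict Implicit. Unset Printing Implicit Defensive.
Import Order.TTheory GRing.Theory Num.Theory.
Local Open Scope ring_scope.

Section PowerSeries.
Variable R : comUnitRingType.

Definition series := nat -> R.

Definition ps1 : series := fun k => if k == 0%N then 1 else 0.
Definition psadd (f g : series) : series := fun k => f k + g k.
Definition psmul (f g : series) : series :=
  fun k => \sum_(i < k.+1) f i * g (k - i)%N.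
Definition psmonX (a : R) : series := fun k => if k == 1%N then a else 0.

(* coefficients b_0..b_k of the multiplicative inverse of f (meaningful
   when f 0 is a unit, e.g. f 0 = 1):
   b_0 = (f 0)^-1,  b_k = -(f 0)^-1 * sum_{i=1..k} f_i b_{k-i}. *)
Fixpoint invl (f : series) (k : nat) : seq R :=
  match k with
  | 0 => [:: (f 0%N)^-1]
  | k'.+1 => let s := invl f k' in
      rcons s (- (f 0%N)^-1 * \sum_(i < k) f i.+1 * nth 0 s (k' - i)%N)
  end.
Definition psinv (f : series) : series := fun k => nth 0 (invl f k) k.

(* cf_tail a j L = 1 + a_j x / (1 + a_{j+1} x / ( ... / (1 + a_{j+L-1} x / 1)))
   (L partial numerators a_j x, ..., a_{j+L-1} x). *)
Fixpoint cf_tail (a : nat -> R) (j L : nat) : series :=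
  match L with
  | 0 => ps1
  | L'.+1 => psadd ps1 (psmul (psmonX (a j)) (psinv (cf_tail a j.+1 L')))
  end.

Definition cfK (a : nat -> R) (N : nat) : series := psinv (cf_tail a 1 N).

(* c_{2j-1} = (m + (j-1) n) x,  c_{2j} = j n x   (j >= 1) *)
Definition acoef (m n : R) (i : nat) : R :=
  if odd i then m + (i./2)%:R * n else (i./2)%:R * n.

Definition fseries (m n : R) : series :=
  fun k => (-1) ^+ k * \prod_(i < k) (m + i%:R * n).

End PowerSeries.

(* Q[m,n] realised as Q[m][n] = {poly {poly rat}}:  m = polyC 'X, n = 'X *)
Definition QmnT := {poly {poly rat}}.
Definition mvar : QmnT := ('X)%:P.
Definition nvar : QmnT := 'X.

(* Main.v *)
Require Import Defs.
From HB Require Import structures.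
From mathcomp Require Import all_boot all_order all_algebra ring.
Import GRing.Theory.
Local Open Scope ring_scope.

Section S.
Variable R : comUnitRingType.
Implicit Types f g h : series R.

Definition tr (n : nat) (f : series R) : {poly R} := \poly_(i < n) f i.

Lemma psmul_poly f g k n : (k < n)%N -> psmul f g k = (tr n f * tr n g)`_k.
Proof.
move=> kn; rewrite /psmul coefM; apply: eq_bigr => i _; rewrite !coef_poly.
have -> : (i < n)%N by apply: leq_ltn_trans kn; rewrite -ltnS.
have -> : (k - i < n)%N by apply: leq_ltn_trans kn; apply: leq_subr.
by [].
Qed.

Lemma coefM_eql (p q r : {poly R}) k :
  (forall i, (i <= k)%N -> p`_i = q`_i) -> (p * r)`_k = (q * r)`_k.
Proof.
move=> H; rewrite !coefM; apply: eq_bigr => i _; rewrite H //.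
by rewrite -ltnS.
Qed.

Lemma psmulC f g k : psmul f g k = psmul g f k.
Proof. by rewrite !(@psmul_poly _ _ k k.+1) // mulrC. Qed.

Lemma psmulA f g h k : psmul (psmul f g) h k = psmul f (psmul g h) k.
Proof.
rewrite !(@psmul_poly _ _ k k.+1) //.
have E1 : (tr k.+1 (psmul f g) * tr k.+1 h)`_k = (tr k.+1 f * tr k.+1 g * tr k.+1 h)`_k.
  apply: coefM_eql => i ik; rewrite coef_poly ltnS ik; apply: psmul_poly; by rewrite ltnS.
have E2 : (tr k.+1 (psmul g h) * tr k.+1 f)`_k = (tr k.+1 g * tr k.+1 h * tr k.+1 f)`_k.
  apply: coefM_eql => i ik; rewrite coef_poly ltnS ik; apply: psmul_poly; by rewrite ltnS.
by rewrite E1 [in RHS]mulrC E2 [in RHS]mulrC mulrA.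
Qed.

Lemma psmulDl f g h k : psmul (psadd f g) h k = psmul f h k + psmul g h k.
Proof. by rewrite /psmul /psadd -big_split; apply: eq_bigr => i _; rewrite mulrDl. Qed.

Lemma psmul1 h k : psmul (ps1 R) h k = h k.
Proof.
rewrite /psmul big_ord_recl /= /ps1 /= mul1r subn0 big1 ?addr0 // => i _.
by rewrite mul0r.
Qed.

Lemma psmul_eqr f g g' k : (forall i, (i <= k)%N -> g i = g' i) ->
  psmul f g k = psmul f g' k.
Proof. move=> H; apply: eq_bigr => i _; rewrite H // leq_subr //. Qed.

Lemma psmul_eql f f' g k : (forall i, (i <= k)%N -> f i = f' i) ->
  psmul f g k = psmul f' g k.
Proof. by move=> H; rewrite psmulC (psmulC f') ; apply: psmul_eqr. Qed.

Lemma psmulX a g k : psmul (psmonX a) g k =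
  if k is k'.+1 then a * g k' else 0.
Proof.
rewrite /psmul /psmonX; case: k => [|k].
  by rewrite big_ord_recl big_ord0 /= mul0r addr0.
rewrite big_ord_recl big_ord_recl /= mul0r add0r subSS subn0 big1 ?addr0 // => i _.
by rewrite /= mul0r.
Qed.

Lemma psinv0 f : psinv f 0 = (f 0%N)^-1.
Proof. by []. Qed.

Lemma size_invl f k : size (invl f k) = k.+1.
Proof. by elim: k => //= k IH; rewrite size_rcons IH. Qed.

Lemma nth_invl f k i : (i <= k)%N -> nth 0 (invl f k) i = psinv f i.
Proof.
elim: k => [|k IH]; first by rewrite leqn0 => /eqP ->.
rewrite leq_eqVlt => /orP [/eqP ->|]; first by [].
rewrite ltnS => ik /=; rewrite nth_rcons size_invl ltnS ik; exact: IH.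
Qed.

Lemma psinvS f k : psinv f k.+1 =
  - (f 0%N)^-1 * \sum_(i < k.+1) f i.+1 * psinv f (k - i)%N.
Proof.
rewrite /psinv /= nth_rcons size_invl ltnn eqxx; congr (_ * _).
by apply: eq_bigr => i _; rewrite nth_invl // leq_subr.
Qed.

Lemma psmulV f k : f 0%N = 1 -> psmul f (psinv f) k = ps1 R k.
Proof.
move=> f0; case: k => [|k].
  by rewrite /psmul big_ord_recl big_ord0 /= psinv0 f0 invr1 mulr1 addr0.
rewrite /psmul big_ord_recl /= f0 mul1r subn0 psinvS f0 invr1 mulN1r.
rewrite /ps1 /= addrC; apply/eqP; rewrite subr_eq0; apply/eqP.
by apply: eq_bigr => i _; rewrite subSS.
Qed.

Lemma cf_tail0 (a : nat -> R) j L : cf_tail a j L 0%N = 1.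
Proof.
case: L => [|L] //=; rewrite /psadd psmulX /ps1 /= addr0 //.
Qed.

Variable a : nat -> R.
Variable H : nat -> series R.
Hypothesis H0 : forall j, H j 0%N = 1.
Hypothesis Hrec : forall j k,
  H j k = H j.+1 k + psmul (psmonX (a j.+1)) (H j.+2) k.

Lemma trick (C G1 G2 : series R) L : C 0%N = 1 ->
  (forall k, (k <= L)%N -> psmul C G1 k = G2 k) ->
  forall k, (k <= L)%N -> psmul (psinv C) G2 k = G1 k.
Proof.
move=> C0 HC k kL.
rewrite (@psmul_eqr _ _ (psmul C G1)); last first.
  by move=> i ik; rewrite HC // (leq_trans ik kL).
rewrite -psmulA (@psmul_eql _ (ps1 R)) ?psmul1 //.
by move=> i _; rewrite psmulC psmulV.
Qed.

Lemma main_cf L : forall j k, (k <= L)%N ->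
  psmul (cf_tail a j.+1 L) (H j.+1) k = H j k.
Proof.
elim: L => [|L IH] j k.
  by rewrite leqn0 => /eqP ->; rewrite psmul1 !H0.
move=> kL /=; rewrite psmulDl psmul1 psmulA psmulX [RHS]Hrec psmulX.
case: k kL => [|k] kL //; congr (_ + _); congr (_ * _).
apply: (@trick _ _ _ L); first exact: cf_tail0.
  by move=> i iL; apply: IH.
by [].
Qed.

Lemma main_cfK N k : (forall i, H 0%N i = ps1 R i) -> (k <= N)%N ->
   cfK a N k = H 1%N k.
Proof.
move=> Hz kN; rewrite /cfK.
rewrite -(@trick (cf_tail a 1 N) (H 1%N) (ps1 R) N) //; first last.
  by move=> i iN; rewrite main_cf // Hz.
  exact: cf_tail0.
by rewrite psmulC psmul1.
Qed.
End S.

Section T.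
Variable R : comUnitRingType.
Variables m n : R.
Definition Hp (u h k : nat) : R :=
  (-1)^+k * ('C(u + k - 1, k))%:R * \prod_(l < k) (m + (h + l)%:R * n).

Lemma Hp0 u h : Hp u h 0 = 1.
Proof. by rewrite /Hp expr0 bin0 big_ord0 !mul1r. Qed.

Lemma RecA i k : Hp i i k.+1 = Hp i.+1 i k.+1 + (m + i%:R * n) * Hp i.+1 i.+1 k.
Proof.
rewrite /Hp.
have -> : (i + k.+1 - 1 = i + k)%N by rewrite addnS subn1.
have -> : (i.+1 + k.+1 - 1 = (i + k).+1)%N by rewrite addnS addSn subn1.
have -> : (i.+1 + k - 1 = i + k)%N by rewrite addSn subn1.
rewrite binS big_ord_recl /= addn0.
rewrite (eq_bigr (fun l : 'I_k => m + (i.+1 + l)%:R * n)); last by move=> l _; rewrite /bump add1n addnS.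
set Q := \prod_(l < k) _.
rewrite natrD exprS; ring.
Qed.

Lemma RecB i k : Hp i.+1 i k.+1 = Hp i.+1 i.+1 k.+1 + ((i.+1)%:R * n) * Hp i.+2 i.+1 k.
Proof.
rewrite /Hp.
have -> : (i.+1 + k.+1 - 1 = (i + k).+1)%N by rewrite addnS addSn subn1.
have -> : (i.+2 + k - 1 = (i + k).+1)%N by rewrite !addSn subn1.
rewrite big_ord_recl big_ord_recr /= addn0.
rewrite (eq_bigr (fun l : 'I_k => m + (i.+1 + l)%:R * n)); last by move=> l _; rewrite /bump add1n addnS.
set Q := \prod_(l < k) _.
have hb : (i.+1)%:R * ('C((i + k).+1, k))%:R = (k.+1)%:R * ('C((i + k).+1, k.+1))%:R :> R.
  by rewrite -!natrM mul_bin_left subSn ?leq_addl // addnK.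
set C0 := ('C((i + k).+1, k))%:R in hb *.
set C1 := ('C((i + k).+1, k.+1))%:R in hb *.
apply/eqP; rewrite -subr_eq0; apply/eqP.
rewrite exprS.
transitivity ((-1)^+k * n * Q * ((k.+1)%:R * C1 - (i.+1)%:R * C0)).
  rewrite !natrD; ring.
by rewrite hb subrr mulr0.
Qed.

Definition Hs (j k : nat) : R := Hp (uphalf j) (j./2) k.

Lemma Hs0 j : Hs j 0 = 1.
Proof. exact: Hp0. Qed.

Lemma Hsz k : Hs 0 k = ps1 R k.
Proof.
rewrite /Hs /ps1; case: k => [|k]; first exact: Hp0.
by rewrite /Hp /= add0n subn1 /= bin_small // mulr0 mul0r.
Qed.

Lemma Hs1 k : Hs 1 k = fseries m n k.
Proof.
rewrite /Hs /Hp /fseries /= add1n subn1 /= binn mulr1.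
by congr (_ * _); apply: eq_bigr => l _; rewrite add0n.
Qed.

Lemma Hsrec j k : Hs j k = Hs j.+1 k + psmul (psmonX (acoef m n j.+1)) (Hs j.+2) k.
Proof.
rewrite psmulX; case: k => [|k]; first by rewrite !Hs0 addr0.
rewrite /Hs /acoef.
have [i [-> | ->]] : exists i, j = i.*2 \/ j = i.*2.+1.
  have := odd_double_half j; case: (odd j) => /= E; exists j./2; [right|left]; exact: esym E.
  have h1 : uphalf (i.*2.+1) = i.+1 by rewrite /= ?doubleK ?uphalf_double.
  have h2 : (i.*2.+1)./2 = i by rewrite /= ?doubleK ?uphalf_double.
  have h3 : uphalf (i.*2.+2) = i.+1 by rewrite /= ?doubleK ?uphalf_double.
  have h4 : (i.*2.+2)./2 = i.+1 by rewrite /= ?doubleK ?uphalf_double.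
  have h5 : uphalf (i.*2.+3) = i.+2 by rewrite /= ?doubleK ?uphalf_double.
  have h6 : (i.*2.+3)./2 = i.+1 by rewrite /= ?doubleK ?uphalf_double.
  by rewrite uphalf_double doubleK h1 h2 h3 h4 /= odd_double RecA.
have h1 : uphalf (i.*2.+1) = i.+1 by rewrite /= ?doubleK ?uphalf_double.
have h2 : (i.*2.+1)./2 = i by rewrite /= ?doubleK ?uphalf_double.
have h3 : uphalf (i.*2.+2) = i.+1 by rewrite /= ?doubleK ?uphalf_double.
have h4 : (i.*2.+2)./2 = i.+1 by rewrite /= ?doubleK ?uphalf_double.
have h5 : uphalf (i.*2.+3) = i.+2 by rewrite /= ?doubleK ?uphalf_double.
have h6 : (i.*2.+3)./2 = i.+1 by rewrite /= ?doubleK ?uphalf_double.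
by rewrite h1 h2 h3 h4 h5 h6 /= odd_double /= RecB.
Qed.
End T.

Theorem mainTheorem1 :
  (forall N k : nat, (1 <= N)%N -> (k <= N)%N ->
     cfK (acoef mvar nvar) N k = fseries mvar nvar k) /\
  (forall k : nat, exists N0 : nat, forall N : nat, (N0 <= N)%N ->
     cfK (acoef mvar nvar) N k = fseries mvar nvar k).
Proof.
have key : forall N k : nat, (k <= N)%N ->
     cfK (acoef mvar nvar) N k = fseries mvar nvar k.
  move=> N k kN.
  rewrite (@main_cfK _ (acoef mvar nvar) (@Hs _ mvar nvar)) //.
  - exact: Hs1.
  - exact: Hs0.
  - exact: Hsrec.
  - exact: Hsz.
split; first by move=> N k _; apply: key.
by move=> k; exists k => N; apply: key.
Qed.
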